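(* Let $f:\mathbb{S}^D\to\mathbb{R}$ be differentiable everywhere, and let $z\in\mathbb{S}^D$ satisfy $\inf_{y\in\mathbb{S}^D}\{f(y)-y\cdot z\}>-\infty$. Then for every $\varepsilon>0$ there is $y_\varepsilon\in\mathbb{S}^D$ such that $\inf_{y\in\mathbb{S}^D}\big\{f(y)+\varepsilon\sqrt{1+|y|^2}-y\cdot z\big\}=f(y_\varepsilon)+\varepsilon\sqrt{1+|y_\varepsilon|^2}-y_\varepsilon\cdot z$ and $|z-\nabla f(y_\varepsilon)|\le\varepsilon$. Moreover, $\lim_{\varepsilon\to0}\inf_{y\in\mathbb{S}^D}\big\{f(y)+\varepsilon\sqrt{1+|y|^2}-y\cdot z\big\}=\inf_{y\in\mathbb{S}^D}\{f(y)-y\cdot z\}$.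
   Context: $\mathbb{S}^D$ is the space of real symmetric $D\times D$ matrices, equipped with the entrywise inner product $a\cdot b=\sum_{i,j}a_{ij}b_{ij}$ and norm $|a|=\sqrt{a\cdot a}$; $\nabla f$ denotes the gradient of $f$ on $\mathbb{S}^D$ with respect to this inner product. *)

(* Defs.v *)
From HB Require Import structures.
From mathcomp Require Import all_boot all_order all_algebra.
From mathcomp Require Import classical_sets reals.
Set Implicit Arguments. Unset Strict Implicit. Unset Printing Implicit Defensive.
Import Order.TTheory GRing.Theory Num.Theory.
Local Open Scope ring_scope.
Local Open Scope classical_set_scope.

Section Defs.
Context {R : realType} {D : nat}.

(* membership in S^D : real symmetric D x D matrices *)
Definition symmx (A : 'M[R]_D) : Prop := A^T = A.

Definition mdot (a b : 'M[R]_D) : R := \sum_(i < D) \sum_(j < D) a i j * b i j.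

Definition mnorm (a : 'M[R]_D) : R := Num.sqrt (mdot a a).

Definition is_gradient (f : 'M[R]_D -> R) (y g : 'M[R]_D) : Prop :=
  symmx g /\
  forall e : R, 0 < e -> exists d : R, 0 < d /\
    forall h : 'M[R]_D, symmx h -> mnorm h < d ->
      `|f (y + h) - f y - mdot g h| <= e * mnorm h.

Definition sym_differentiable (f : 'M[R]_D -> R) : Prop :=
  forall y, symmx y -> exists g, is_gradient f y g.

Definition Sinf (F : 'M[R]_D -> R) : R := inf [set F y | y in [set y | symmx y]].

End Defs.

(* Main.v *)
Require Import Defs.
From HB Require Import structures.
From mathcomp Require Import all_boot all_order all_algebra.
From mathcomp Require Import classical_sets reals.
From mathcomp Require Import ring lra.
From mathcomp Require Import boolp topology normedtype derive.
Import Order.TTheory GRing.Theory Num.Theory.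
Import numFieldNormedType.Exports.
Local Open Scope ring_scope.


Section Alg.
Context {R : realType} {D : nat}.
Implicit Types a b c : 'M[R]_D.

Lemma mdotC a b : mdot a b = mdot b a.
Proof. by apply: eq_bigr => i _; apply: eq_bigr => j _; rewrite mulrC. Qed.

Lemma mdotDl a b c : mdot (a + b) c = mdot a c + mdot b c.
Proof.
rewrite /mdot -big_split; apply: eq_bigr => i _; rewrite -big_split.
by apply: eq_bigr => j _; rewrite mxE mulrDl.
Qed.

Lemma mdotZl (t : R) a b : mdot (t *: a) b = t * mdot a b.
Proof.
rewrite /mdot mulr_sumr; apply: eq_bigr => i _; rewrite mulr_sumr.
by apply: eq_bigr => j _; rewrite mxE mulrA.
Qed.

Lemma mdotNl a b : mdot (- a) b = - mdot a b.
Proof. by rewrite -scaleN1r mdotZl mulN1r. Qed.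

Lemma mdotBl a b c : mdot (a - b) c = mdot a c - mdot b c.
Proof. by rewrite mdotDl mdotNl. Qed.

Lemma mdotDr a b c : mdot c (a + b) = mdot c a + mdot c b.
Proof. by rewrite mdotC mdotDl !(mdotC c). Qed.

Lemma mdotZr (t : R) a b : mdot b (t *: a) = t * mdot b a.
Proof. by rewrite mdotC mdotZl mdotC. Qed.

Lemma mdotBr a b c : mdot c (a - b) = mdot c a - mdot c b.
Proof. by rewrite mdotC mdotBl !(mdotC c). Qed.

Lemma mdot_ge0 a : 0 <= mdot a a.
Proof. by apply: sumr_ge0 => i _; apply: sumr_ge0 => j _; rewrite -expr2 sqr_ge0. Qed.

Lemma mnorm_ge0 a : 0 <= mnorm a.
Proof. exact: sqrtr_ge0. Qed.

Lemma mnorm_sq a : mnorm a ^+ 2 = mdot a a.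
Proof. by rewrite sqr_sqrtr // mdot_ge0. Qed.

Lemma CS_sq a b : mdot a b ^+ 2 <= mdot a a * mdot b b.
Proof.
have H t : 0 <= t ^+ 2 * mdot a a - 2 * t * mdot a b + mdot b b.
  suff -> : t ^+ 2 * mdot a a - 2 * t * mdot a b + mdot b b
     = mdot (t *: a - b) (t *: a - b) by exact: mdot_ge0.
  rewrite !(mdotBl, mdotBr, mdotZl, mdotZr) (mdotC b a); ring.
have A0 := mdot_ge0 a; have B0 := mdot_ge0 b.
have [Ap|A0'] := ltP 0 (mdot a a).
  have := H (mdot a b / mdot a a).
  set A := mdot a a; set C := mdot a b; set B := mdot b b => h.
  have e : (C / A) ^+ 2 * A - 2 * (C / A) * C + B = (A * B - C^+2) / A.
    by field; rewrite gt_eqF.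
  rewrite e in h.
  have : 0 <= (A * B - C ^+ 2) / A * A by apply: mulr_ge0 => //; exact: ltW.
  rewrite divfK ?gt_eqF //; lra.
have A00 : mdot a a = 0 by apply/le_anti; rewrite A0' A0.
rewrite A00 mul0r.
have [C0|C0] := eqVneq (mdot a b) 0; first by rewrite C0 expr0n.
have := H ((mdot b b + 1) / mdot a b).
rewrite A00 mulr0 add0r.
rewrite -mulrA divfK //.
lra.
Qed.

Lemma CS a b : `|mdot a b| <= mnorm a * mnorm b.
Proof.
rewrite /mnorm -sqrtrM ?mdot_ge0 // -sqrtr_sqr.
by rewrite ler_sqrt ?CS_sq // mulr_ge0 ?mdot_ge0.
Qed.

Lemma mnormD a b : mnorm (a + b) <= mnorm a + mnorm b.
Proof.
rewrite -(ler_pXn2r (_ : 0 < 2)%N) ?nnegrE ?addr_ge0 ?mnorm_ge0 //.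
rewrite mnorm_sq sqrrD !mnorm_sq mdotDl !mdotDr (mdotC b a).
have := CS a b; have := ler_norm (mdot a b); lra.
Qed.

Lemma mnormZ (t : R) a : mnorm (t *: a) = `|t| * mnorm a.
Proof.
by rewrite /mnorm mdotZl mdotZr mulrA -expr2 sqrtrM ?sqr_ge0 // sqrtr_sqr.
Qed.

Lemma mnormN a : mnorm (- a) = mnorm a.
Proof. by rewrite -scaleN1r mnormZ normrN1 mul1r. Qed.

Lemma mnormB_ge a b : `|mnorm a - mnorm b| <= mnorm (a - b).
Proof.
rewrite ler_norml; apply/andP; split.
  have e : mnorm (b - a) = mnorm (a - b) by rewrite -mnormN opprB.
  have := mnormD (b - a) a; rewrite subrK e; lra.
have := mnormD (a - b) b; rewrite subrK; lra.
Qed.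

Lemma sqrt1_lip (x y : R) : `|Num.sqrt (1 + x ^+ 2) - Num.sqrt (1 + y ^+ 2)| <= `|x - y|.
Proof.
set p := Num.sqrt _; set q := Num.sqrt _.
have p0 : 0 <= p by exact: sqrtr_ge0.
have q0 : 0 <= q by exact: sqrtr_ge0.
have p2 : p ^+ 2 = 1 + x ^+ 2 by rewrite sqr_sqrtr // addr_ge0 ?sqr_ge0.
have q2 : q ^+ 2 = 1 + y ^+ 2 by rewrite sqr_sqrtr // addr_ge0 ?sqr_ge0.
have pq : 1 + x * y <= p * q.
  have : (1 + x * y) ^+ 2 <= (p * q) ^+ 2.
    rewrite exprMn p2 q2; have := sqr_ge0 (x - y); nra.
  have [h|h] := leP 0 (1 + x * y).
    by rewrite ler_pXn2r // nnegrE // mulr_ge0.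
  move=> _; apply: le_trans (ltW h) _; exact: mulr_ge0.
rewrite -(ler_pXn2r (_ : 0 < 2)%N) ?nnegrE ?normr_ge0 // !real_normK ?num_real //.
nra.
Qed.

Lemma entry_le a i j : `|a i j| <= mnorm a.
Proof.
rewrite /mnorm -sqrtr_sqr ler_sqrt ?mdot_ge0 //.
rewrite /mdot (bigD1 i) //= (bigD1 j) //= -expr2 -addrA lerDl.
apply: addr_ge0; apply: sumr_ge0 => k _;
  [by rewrite -expr2 sqr_ge0 | apply: sumr_ge0 => l _; by rewrite -expr2 sqr_ge0].
Qed.

Lemma mnorm_le_entries a (t : R) : 0 <= t -> (forall i j, `|a i j| <= t) ->
  mnorm a <= D%:R * t.
Proof.
move=> t0 H.
have e : D%:R * t = Num.sqrt ((D%:R * t) ^+ 2) by rewrite sqrtr_sqr ger0_norm ?mulr_ge0.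
rewrite e /mnorm ler_sqrt ?sqr_ge0 //.
apply: (@le_trans _ _ (\sum_(i < D) \sum_(j < D) (t * t))).
  apply: ler_sum => i _; apply: ler_sum => j _.
  apply: le_trans (ler_norm _) _; rewrite normrM; apply: ler_pM => //.
rewrite (eq_bigr (fun _ => (t * t) *+ D)); last by move=> i _; rewrite sumr_const card_ord.
rewrite sumr_const card_ord.
by rewrite -mulrnA -(mulr_natr (t * t)) natrM exprMn !expr2 (mulrC (t * t)).
Qed.
End Alg.

Local Open Scope classical_set_scope.



Section Top.
Context {R : realType} {D : nat}.

Definition Psym (v : 'rV[R]_(D * D)) : 'M[R]_D :=
  \matrix_(i, j) (2^-1 * (v 0 (mxvec_index i j) + v 0 (mxvec_index j i))).

Lemma Psym_sym v : symmx (Psym v).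
Proof. by apply/matrixP => i j; rewrite !mxE addrC. Qed.

Lemma Psym_mxvec (y : 'M[R]_D) : symmx y -> Psym (mxvec y) = y.
Proof.
move=> sy; apply/matrixP => i j; rewrite !mxE !mxvecE.
have -> : y j i = y i j by rewrite -{1}sy mxE.
by field.
Qed.

Lemma Psym0 : Psym 0 = 0.
Proof. by apply/matrixP => i j; rewrite !mxE addr0 mulr0. Qed.

Lemma ball_entry (v w : 'rV[R]_(D * D)) (e : R) : ball v e w -> forall k, `|v 0 k - w 0 k| < e.
Proof.
move=> [_ H] k. have := H 0 k. done.
Qed.


Definition Fe (f : 'M[R]_D -> R) (z : 'M[R]_D) (e : R) (y : 'M[R]_D) :=
  f y + e * Num.sqrt (1 + mnorm y ^+ 2) - mdot y z.

Lemma grad_bound (f : 'M[R]_D -> R) (y g : 'M[R]_D) : is_gradient f y g -> exists2 d : R, 0 < d &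
  forall h : 'M[R]_D, symmx h -> mnorm h < d -> `|f (y + h) - f y| <= (mnorm g + 1) * mnorm h.
Proof.
case=> _ H; have [d [d0 Hd]] := H 1 ltr01; exists d => // h sh hd.
have h2 := Hd h sh hd; have h1 := CS g h.
rewrite (_ : f (y + h) - f y = (f (y + h) - f y - mdot g h) + mdot g h); last by rewrite subrK.
apply: le_trans (ler_normD _ _) _; rewrite mulrDl mul1r; lra.
Qed.

Lemma Fe_bound (f : 'M[R]_D -> R) (z : 'M[R]_D) (e : R) (y : 'M[R]_D) : sym_differentiable f -> symmx y -> 0 <= e ->
  exists K : R, exists d : R, [/\ 0 <= K, 0 < d & forall h : 'M[R]_D, symmx h -> mnorm h < d ->
    `|Fe f z e (y + h) - Fe f z e y| <= K * mnorm h].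
Proof.
move=> fd sy e0; have [g Hg] := fd y sy; have [d d0 Hd] := @grad_bound f y g Hg.
exists (mnorm g + 1 + e + mnorm z), d; split => //.
  by rewrite !addr_ge0 ?mnorm_ge0.
move=> h sh hd; rewrite /Fe mdotDl.
have h1 := Hd h sh hd.
have h2 : `|Num.sqrt (1 + mnorm (y + h) ^+ 2) - Num.sqrt (1 + mnorm y ^+ 2)| <= mnorm h.
  apply: le_trans (sqrt1_lip _ _) _.
  by have := mnormB_ge (y + h) y; rewrite (addrC y h) addrK.
have h3 : `|mdot h z| <= mnorm h * mnorm z by exact: CS.
set A := f (y + h) - f y.
set B := Num.sqrt (1 + mnorm (y + h) ^+ 2) - Num.sqrt (1 + mnorm y ^+ 2).
have -> : f (y + h) + e * Num.sqrt (1 + mnorm (y + h) ^+ 2) - (mdot y z + mdot h z) -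
  (f y + e * Num.sqrt (1 + mnorm y ^+ 2) - mdot y z) = A + e * B - mdot h z.
  by rewrite /A /B; ring.
apply: le_trans (ler_normB _ _) _; apply: le_trans (lerD (ler_normD _ _) (lexx _)) _.
rewrite normrM (ger0_norm e0).
have : e * `|B| <= e * mnorm h by apply: ler_wpM2l.
move: h1; rewrite !mulrDl mul1r; lra.
Qed.

Lemma symmxB (a b : 'M[R]_D) : symmx a -> symmx b -> symmx (a - b).
Proof.
move=> sa sb; apply/matrixP => i j; rewrite !mxE.
have -> : a j i = a i j by rewrite -{1}sa mxE.
have -> : b j i = b i j by rewrite -{1}sb mxE.
by [].
Qed.

Lemma G_cont (f : 'M[R]_D -> R) (z : 'M[R]_D) (e : R) :
  sym_differentiable f -> 0 <= e -> continuous (fun v => Fe f z e (Psym v)).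
Proof.
move=> fd e0 v; apply/(@cvgrPdist_lt _ _ _ (nbhs v) (nbhs_filter v)) => eps eps0.
have [K [d [K0 d0 HK]]] := Fe_bound f z e (Psym v) fd (Psym_sym v) e0.
pose m := Num.min d (eps / (K + 1)).
have K1 : 0 < K + 1 by lra.
have m0 : 0 < m by rewrite lt_min d0 divr_gt0.
have D1 : 0 < D%:R + 1 :> R by have := ler0n R D; lra.
pose delta := m / (D%:R + 1).
have delta0 : 0 < delta by rewrite divr_gt0.
apply/nbhs_ballP; exists delta => // w /ball_entry Hw /=.
set h := Psym w - Psym v.
have sh : symmx h by apply: symmxB; apply: Psym_sym.
have hb : forall i j, `|h i j| <= delta.
  move=> i j; rewrite /h !mxE.
  have := Hw (mxvec_index i j); have := Hw (mxvec_index j i).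
  rewrite !ltr_norml ler_norml => /andP[a1 a2] /andP[b1 b2].
  apply/andP; split; lra.
have hn : mnorm h <= D%:R * delta by apply: mnorm_le_entries => //; exact: ltW.
have Dd : D%:R * delta < m.
  rewrite /delta mulrA ltr_pdivrMr // mulrDr mulr1 mulrC; lra.
have hm : mnorm h < m by apply: le_lt_trans hn Dd.
have hd : mnorm h < d by apply: lt_le_trans hm _; rewrite ge_min lexx.
have := HK h sh hd.
have -> : Psym v + h = Psym w by rewrite /h addrC subrK.
rewrite distrC => H.
apply: le_lt_trans H _.
have hme : mnorm h <= eps / (K + 1) by apply: ltW; apply: lt_le_trans hm _; rewrite ge_min lexx orbT.
have q : eps / (K + 1) * (K + 1) = eps by rewrite divfK // gt_eqF.
have : K * mnorm h <= K * (eps / (K + 1)) by apply: ler_wpM2l.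
have := mnorm_ge0 h.
have : 0 < eps / (K + 1) by rewrite divr_gt0.
move: q; set q := eps / (K + 1); nra.
Qed.

Lemma exists_min (f : 'M[R]_D -> R) (z : 'M[R]_D) (e : R) :
  sym_differentiable f -> 0 < e ->
  (exists m : R, forall y : 'M[R]_D, symmx y -> m <= f y - mdot y z) ->
  exists ye, symmx ye /\ forall y, symmx y -> Fe f z e ye <= Fe f z e y.
Proof.
move=> fd e0 [m Hm].
pose r := Num.max 0 ((Fe f z e 0 - m) / e).
have r0 : 0 <= r by rewrite le_max lexx.
have r1 : (Fe f z e 0 - m) / e <= r by rewrite le_max lexx orbT.
pose A := [set v : 'rV[R]_(D * D) | forall i, (`[- r, r]%classic : set R) (v ord0 i)].
have cA : compact A.
  by apply: (@rV_compact _ _ (fun=> `[- r, r]%classic)) => _; exact: segment_compact.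
have A0v : A 0 by move=> i /=; rewrite mxE in_itv /= oppr_le0 r0.
have A0 : A !=set0 by exists 0.
have cG : {within A, continuous (fun v => Fe f z e (Psym v))}.
  by apply: continuous_subspaceT; apply: G_cont => //; exact: ltW.
have [c cA' Hc] := compact_EVT_min A0 cA cG.
exists (Psym c); split; first exact: Psym_sym.
have HG0 : Fe f z e (Psym c) <= Fe f z e 0.
  by rewrite -Psym0; apply: Hc; rewrite inE.
move=> y sy.
have [Hb|Hb] := pselect (forall i j, `|y i j| <= r).
  rewrite -(Psym_mxvec y sy); apply: Hc; rewrite inE => k /=.
  case/mxvec_indexP: k => i j; rewrite mxvecE in_itv /= -ler_norml; exact: Hb.
move/existsNP: Hb => [i /existsNP [j /negP]]; rewrite -ltNge => Hij.
have ny : r < mnorm y by apply: lt_le_trans Hij (entry_le _ _ _).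
apply: le_trans HG0 _.
have sq : mnorm y <= Num.sqrt (1 + mnorm y ^+ 2).
  rewrite -{1}(ger0_norm (mnorm_ge0 y)) -sqrtr_sqr ler_sqrt; last by rewrite addr_ge0 ?sqr_ge0.
  by rewrite lerDr.
have Hy := Hm y sy.
have : (Fe f z e 0 - m) <= mnorm y * e.
  by rewrite -ler_pdivrMr //; apply: le_trans r1 (ltW ny).
have : e * mnorm y <= e * Num.sqrt (1 + mnorm y ^+ 2) by apply: ler_wpM2l => //; exact: ltW.
rewrite /Fe; lra.
Qed.

Lemma symmxD (a b : 'M[R]_D) : symmx a -> symmx b -> symmx (a + b).
Proof.
move=> sa sb; apply/matrixP => i j; rewrite !mxE.
have -> : a j i = a i j by rewrite -{1}sa mxE.
have -> : b j i = b i j by rewrite -{1}sb mxE.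
by [].
Qed.

Lemma symmxZ (t : R) (a : 'M[R]_D) : symmx a -> symmx (t *: a).
Proof.
move=> sa; apply/matrixP => i j; rewrite !mxE.
have -> : a j i = a i j by rewrite -{1}sa mxE.
by [].
Qed.

Lemma foc (f : 'M[R]_D -> R) (z : 'M[R]_D) (e : R) (ye g : 'M[R]_D) :
  symmx z -> 0 <= e -> symmx ye -> is_gradient f ye g ->
  (forall y, symmx y -> Fe f z e ye <= Fe f z e y) -> mnorm (z - g) <= e.
Proof.
move=> sz e0 sye Hg Hmin.
have sg : symmx g by case: Hg.
set w := z - g.
have sw : symmx w by apply: symmxB.
apply/ler_addgt0Pr => eps eps0.
have [w0|w0] := eqVneq (mnorm w) 0; first by rewrite w0; lra.
have nw : 0 < mnorm w by rewrite lt_def w0 mnorm_ge0.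
case: Hg => _ /(_ eps eps0) [d [d0 Hd]].
pose t := d / (2 * mnorm w).
have t0 : 0 < t by rewrite divr_gt0 // mulr_gt0.
pose h := t *: w.
have sh : symmx h by exact: symmxZ.
have E4 : mnorm h = t * mnorm w by rewrite /h mnormZ ger0_norm // ltW.
have tw : t * mnorm w = d / 2.
  by rewrite /t; field; rewrite gt_eqF.
have hd : mnorm h < d by rewrite E4 tw; lra.
have H1 := Hd h sh hd.
have H2 := Hmin (ye + h) (symmxD ye h sye sh).
have H3 : Num.sqrt (1 + mnorm (ye + h) ^+ 2) - Num.sqrt (1 + mnorm ye ^+ 2) <= mnorm h.
  apply: le_trans (ler_norm _) _; apply: le_trans (sqrt1_lip _ _) _.
  by have := mnormB_ge (ye + h) ye; rewrite (addrC ye h) addrK.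
have E1 : mdot g h = t * mdot g w by rewrite mdotZr.
have E2 : mdot h z = t * mdot w z by rewrite mdotZl.
have E3 : mdot w z - mdot g w = mnorm w ^+ 2.
  by rewrite mnorm_sq (mdotC g w) -mdotBr.
have H4 : e * (Num.sqrt (1 + mnorm (ye + h) ^+ 2) - Num.sqrt (1 + mnorm ye ^+ 2)) <= e * mnorm h.
  exact: ler_wpM2l.
move: H2; rewrite /Fe mdotDl => H2.
have H5 := ler_norm (f (ye + h) - f ye - mdot g h).
have key : 0 <= t * mnorm w * (e + eps - mnorm w).
  have -> : t * mnorm w * (e + eps - mnorm w) =
    e * (t * mnorm w) + eps * (t * mnorm w) - t * (mdot w z - mdot g w) by rewrite E3; ring.
  rewrite mulrBr -E1 -E2 -E4.
  move: H4; rewrite mulrBr; lra.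
by rewrite pmulr_rge0 ?(mulr_gt0 t0 nw) // subr_ge0 in key.
Qed.

End Top.




Lemma Sinf_le {R : realType} {D : nat} {F : 'M[R]_D -> R} {m : R} {y : 'M[R]_D} :
  (forall x, symmx x -> m <= F x) -> symmx y -> Sinf F <= F y.
Proof.
move=> Hm sy; rewrite /Sinf; apply: ge_inf; last by exists y.
by exists m => _ [x sx <-]; exact: Hm.
Qed.

Lemma Sinf_min {R : realType} {D : nat} {F : 'M[R]_D -> R} {y : 'M[R]_D} :
  (forall x, symmx x -> F y <= F x) -> symmx y -> Sinf F = F y.
Proof.
move=> Hm sy; apply/le_anti/andP; split; first exact: (Sinf_le Hm sy).
rewrite /Sinf; apply: lb_le_inf; first by exists (F y), y.
by move=> _ [x sx <-]; exact: Hm.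
Qed.

Lemma symmx0 (R : realType) (D : nat) : symmx (0 : 'M[R]_D).
Proof. by apply/matrixP => i j; rewrite !mxE. Qed.

Local Close Scope classical_set_scope.

Theorem lemma3p2 (R : realType) (D : nat) (f : 'M[R]_D -> R) (z : 'M[R]_D) :
  sym_differentiable f ->
  symmx z ->
  (exists m : R, forall y : 'M[R]_D, symmx y -> m <= f y - mdot y z) ->
  (forall e : R, 0 < e ->
     exists ye : 'M[R]_D, symmx ye /\
       Sinf (fun y => f y + e * Num.sqrt (1 + mnorm y ^+ 2) - mdot y z)
         = f ye + e * Num.sqrt (1 + mnorm ye ^+ 2) - mdot ye z /\
       exists g : 'M[R]_D, is_gradient f ye g /\ mnorm (z - g) <= e) /\
  (forall eta : R, 0 < eta -> exists delta : R, 0 < delta /\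
     forall e : R, 0 < e -> e < delta ->
       `| Sinf (fun y => f y + e * Num.sqrt (1 + mnorm y ^+ 2) - mdot y z)
          - Sinf (fun y => f y - mdot y z) | < eta).
Proof.
move=> fd sz hm.
split.
  move=> e e0; have [ye [sye Hmin]] := exists_min _ _ _ fd e0 hm.
  exists ye; split => //; split.
    exact: (Sinf_min (F := Fe f z e) Hmin sye).
  have [g Hg] := fd ye sye; exists g; split => //.
  exact: (foc _ _ _ _ _ sz (ltW e0) sye Hg Hmin).
move=> eta eta0.
have [m Hm] := hm.
set S0 := Sinf (fun y => f y - mdot y z).
have hinf : has_inf [set (fun y => f y - mdot y z) y | y in [set y | symmx y]].
  split; first by exists (f 0 - mdot 0 z), 0 => //; exact: symmx0.
  by exists m => _ [x sx <-]; exact: Hm.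
have eta2 : 0 < eta / 2 by rewrite divr_gt0.
have [_ [y0 sy0 <-] Hy0] := inf_adherent eta2 hinf.
rewrite -/(Sinf _) -/S0 in Hy0.
pose c := Num.sqrt (1 + mnorm y0 ^+ 2).
have c0 : 0 < c by rewrite sqrtr_gt0 ltr_wpDr ?sqr_ge0.
exists (eta / 2 / c); split; first by rewrite divr_gt0.
move=> e e0 ed.
have [ye [sye Hmin]] := exists_min _ _ _ fd e0 hm.
have -> : Sinf (fun y => f y + e * Num.sqrt (1 + mnorm y ^+ 2) - mdot y z) = Fe f z e ye.
  exact: (Sinf_min (F := Fe f z e) Hmin sye).
have h1 : S0 <= f ye - mdot ye z by apply: (Sinf_le Hm sye).
have h2 : 0 <= e * Num.sqrt (1 + mnorm ye ^+ 2) by rewrite mulr_ge0 ?sqrtr_ge0 // ltW.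
have h3 := Hmin y0 sy0.
have h4 : e * c < eta / 2.
  by move: ed; rewrite ltr_pdivlMr.
rewrite ger0_norm; last by rewrite /Fe subr_ge0; lra.
move: h3; rewrite /Fe -/c; lra.
Qed.
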